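(* Any deterministic distributed dynamic data structure for $2$-hop neighborhood listing that handles edge insertions and deletions requires $\Omega\left(\frac{n}{\log n}\right)$ amortized rounds.
   Context: Highly dynamic network model: a synchronous network on a fixed set $V$ of $n$ nodes with unique identifiers starts as the empty graph; at the beginning of round $i$ the graph is $G_i=(V,E_i)$, obtained from the previous graph by an adversary inserting and/or deleting an arbitrary (unbounded) set of edges. At the start of each round every node is notified only of the insertions/deletions of edges incident to it; then each node may send a message of $O(\log n)$ bits to each of its current neighbors. A distributed dynamic data structure consists of a local part $DS_v$ at each node $v$; at the end of every round, $DS_v$ may be queried and must answer immediately, without any further communication, either with a correct answer or with $\texttt{inconsistent}$. The amortized round complexity is at most $c$ if for every round $i$, the number of rounds up to round $i$ in which at least one node $v$ has $DS_v$ in an inconsistent state, divided by the total number of topology changes that occurred up to round $i$, is at most $c$. Let $E^{v,2}_i$ be the set of edges of $G_i$ incident to $v$ or to a neighbor of $v$. $2$-hop neighborhood listing: $DS_v$ must respond at the end of round $i$ to a query $\{u,w\}$ with $\texttt{true}$ if $\{u,w\}\in E^{v,2}_i$, $\texttt{false}$ otherwise, or $\texttt{inconsistent}$ (equivalently, membership listing of the 3-vertex path $v-u-w$). *)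

(* Defs.v *)
From mathcomp Require Import all_boot.
Set Implicit Arguments. Unset Strict Implicit. Unset Printing Implicit Defensive.

(* A dynamic graph on the node set 'I_n: G i is the graph at round i
   (G 0 is the initial graph, which must be empty). *)
Definition dyn_graph (n : nat) := nat -> rel 'I_n.

Definition valid_dyn (n : nat) (G : dyn_graph n) : Prop :=
  (forall u v, G 0 u v = false) /\
  (forall i u v, G i u v = G i v u) /\
  (forall i u, G i u u = false).

(* Notification of node v at the start of round i: incident insertions
   and deletions. *)
Definition inserted n (G : dyn_graph n) (i : nat) (v : 'I_n) : {set 'I_n} :=
  [set u | G i v u && ~~ G i.-1 v u].
Definition deleted n (G : dyn_graph n) (i : nat) (v : 'I_n) : {set 'I_n} :=
  [set u | G i.-1 v u && ~~ G i v u].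

(* In each round, node v, in local state s and notified of the inserted
   set ins and deleted set del of incident edges, sends
   [send v s ins del u] to each current neighbor u, then updates its state
   with [recv] from the messages received ([None] = u is not a neighbor).
   [answer s u w] is the immediate answer of DS_v (in state s) to the query
   {u,w}: [Some b] is an answer, [None] is "inconsistent". *)
Record dyn_alg (n : nat) := DynAlg {
  state : Type;
  init : 'I_n -> state;
  send : 'I_n -> state -> {set 'I_n} -> {set 'I_n} -> 'I_n -> seq bool;
  recv : 'I_n -> state -> {set 'I_n} -> {set 'I_n} ->
         ('I_n -> option (seq bool)) -> state;
  answer : state -> 'I_n -> 'I_n -> option bool
}.
Arguments state {n} d.
Arguments init {n} d _.
Arguments send {n} d _ _ _ _ _.
Arguments recv {n} d _ _ _ _ _.
Arguments answer {n} d _ _ _.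

Fixpoint exec n (A : dyn_alg n) (G : dyn_graph n) (i : nat) : 'I_n -> state A :=
  match i with
  | 0 => init A
  | k.+1 =>
      let s := exec A G k in
      fun v => recv A v (s v) (inserted G k.+1 v) (deleted G k.+1 v)
        (fun u => if G k.+1 u v
                  then Some (send A u (s u) (inserted G k.+1 u) (deleted G k.+1 u) v)
                  else None)
  end.

Definition msg_bounded n (A : dyn_alg n) (B : nat) : Prop :=
  forall v s ins del u, size (send A v s ins del u) <= B.

Definition two_hop n (G : dyn_graph n) (i : nat) (v u w : 'I_n) : bool :=
  G i u w && [|| u == v, w == v, G i v u | G i v w].

Definition correct_2hop n (A : dyn_alg n) : Prop :=
  forall G : dyn_graph n, valid_dyn G ->
  forall i (v u w : 'I_n) (b : bool), 0 < i ->
    answer A (exec A G i v) u w = Some b -> b = two_hop G i v u w.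

Definition inconsistent_round n (A : dyn_alg n) (G : dyn_graph n) (i : nat) : bool :=
  [exists v : 'I_n, [exists u : 'I_n, [exists w : 'I_n,
     answer A (exec A G i v) u w == None]]].

Definition inconsistent_count n (A : dyn_alg n) (G : dyn_graph n) (i : nat) : nat :=
  \sum_(1 <= k < i.+1) inconsistent_round A G k.

Definition changes n (G : dyn_graph n) (k : nat) : nat :=
  #|[set p : 'I_n * 'I_n | (p.1 < p.2) && (G k p.1 p.2 != G k.-1 p.1 p.2)]|.

Definition total_changes n (G : dyn_graph n) (i : nat) : nat :=
  \sum_(1 <= k < i.+1) changes G k.

(* The amortized round complexity is at most num/den (den > 0). *)
Definition amortized_le n (A : dyn_alg n) (num den : nat) : Prop :=
  forall G : dyn_graph n, valid_dyn G ->
  forall i, den * inconsistent_count A G i <= num * total_changes G i.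

(* Main.v *)
Require Import Defs.
From mathcomp Require Import all_boot zify.
From Stdlib Require Import FunctionalExtensionality.
Set Implicit Arguments. Unset Strict Implicit. Unset Printing Implicit Defensive.

Lemma exec_local n (A : dyn_alg n) (G G' : dyn_graph n) (v : 'I_n) r :
  (forall i y, i <= r -> G i v y = G' i v y) ->
  (forall i y, 0 < i <= r -> G i y v = G' i y v) ->
  (forall i y, 0 < i <= r -> G i y v ->
     send A y (exec A G i.-1 y) (inserted G i y) (deleted G i y) v =
     send A y (exec A G' i.-1 y) (inserted G' i y) (deleted G' i y) v) ->
  exec A G r v = exec A G' r v.
Proof.
elim: r => [//|r IH] H1 H2 H3 /=.
rewrite IH; last 3 first.
- by move=> i y Hi; apply: H1; apply: leqW.
- by move=> i y /andP[Hi Hr]; apply: H2; rewrite Hi leqW.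
- by move=> i y /andP[Hi Hr]; apply: H3; rewrite Hi leqW.
have -> : inserted G r.+1 v = inserted G' r.+1 v.
  by apply/setP => y; rewrite !inE !H1 // leqW.
have -> : deleted G r.+1 v = deleted G' r.+1 v.
  by apply/setP => y; rewrite !inE !H1 // leqW.
idtac.
apply: (f_equal (recv A v _ _ _)); apply: functional_extensionality => y.
rewrite -H2; last by rewrite ltn0Sn leqnn.
case E: (G r.+1 y v) => //.
by rewrite (H3 r.+1 y) ?E ?leqnn.
Qed.

Section Constr.
Variables (n : nat) (u : 'I_n) (h P : nat).
Hypothesis u0 : val u = 0.
Hypothesis h1 : 0 < h.

Definition adjU (W : {set 'I_n}) i (b : 'I_n) :=
  (b \in W) || ((h <= b) && (b <= h + i.-1 %/ P)).
Definition GW W : dyn_graph n := fun i a b =>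
  (0 < i) && (((a == u) && adjU W i b) || ((b == u) && adjU W i a)).
Definition Xs := [set x : 'I_n | (0 < x) && (x < h)].

Lemma adjU_u (W : {set 'I_n}) : W \subset Xs -> forall i, adjU W i u = false.
Proof.
move=> /subsetP sW i; rewrite /adjU u0 [h <= 0]leqNgt h1 /= orbF.
by apply/negP => /sW; rewrite inE u0.
Qed.

Lemma GW_valid (W : {set 'I_n}) : W \subset Xs -> valid_dyn (GW W).
Proof.
move=> sW; split; first by [].
split; first by move=> i a b; rewrite /GW orbC.
move=> i a; rewrite /GW orbb; case: eqP => [->|] //=.
  by rewrite adjU_u // andbF.
by rewrite andbF.
Qed.

Lemma adjU_V (W : {set 'I_n}) i (v : 'I_n) : W \subset Xs -> h <= v ->
  adjU W i v = (v <= h + i.-1 %/ P).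
Proof.
move=> /subsetP sW hv; rewrite /adjU hv /=.
case E: (v \in W) => //=; move: (sW _ E); rewrite inE.
by rewrite [v < h]ltnNge hv andbF.
Qed.

Lemma GW_vy (W : {set 'I_n}) i (v y : 'I_n) : W \subset Xs -> h <= v ->
  GW W i v y = [&& 0 < i, y == u & v <= h + i.-1 %/ P].
Proof.
move=> sW hv; rewrite /GW.
have vu : (v == u) = false by apply/negbTE/eqP => E; move: hv; rewrite E u0 leqNgt h1.
by rewrite vu /= adjU_V.
Qed.

Lemma GW_yv (W : {set 'I_n}) i (v y : 'I_n) : W \subset Xs -> h <= v ->
  GW W i y v = [&& 0 < i, y == u & v <= h + i.-1 %/ P].
Proof. by move=> sW hv; rewrite /GW orbC -/(GW W i v y) GW_vy. Qed.

Lemma GW_ux (W : {set 'I_n}) i (x : 'I_n) : W \subset Xs -> x \in Xs -> 0 < i ->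
  GW W i u x = (x \in W).
Proof.
move=> sW; rewrite inE => /andP[x0 xh] i0.
rewrite /GW i0 eqxx /= adjU_u // andbF orbF /adjU.
by rewrite leqNgt xh /= orbF.
Qed.

Definition msg (A : dyn_alg n) W (v : 'I_n) k :=
  send A u (exec A (GW W) k u) (inserted (GW W) k.+1 u) (deleted (GW W) k.+1 u) v.

Lemma determine (A : dyn_alg n) (corr : correct_2hop A) (W W' : {set 'I_n}) r (v : 'I_n) :
  W \subset Xs -> W' \subset Xs -> val v = h + r %/ P ->
  ~~ inconsistent_round A (GW W) r.+1 -> ~~ inconsistent_round A (GW W') r.+1 ->
  (forall t, t <= r %% P -> msg A W v (r %/ P * P + t) = msg A W' v (r %/ P * P + t)) ->
  W = W'.
Proof.
move=> sW sW' hv c1 c2 Hm.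
have hvv : h <= v by rewrite hv leq_addr.
have Es : exec A (GW W) r.+1 v = exec A (GW W') r.+1 v.
  apply: exec_local.
  - by move=> i y _; rewrite !GW_vy.
  - by move=> i y _; rewrite !GW_yv.
  move=> i y /andP[i0 ir]; rewrite GW_yv // => /and3P[_ /eqP -> vle].
  have le1 : r %/ P <= i.-1 %/ P by rewrite -(leq_add2l h) -hv.
  have le2 : r %/ P * P <= i.-1.
    apply: leq_trans (leq_divM (i.-1) P).
    by apply: leq_mul.
  have le3 : i.-1 - r %/ P * P <= r %% P.
    rewrite leq_subLR -divn_eq.
    by rewrite -ltnS prednK.
  move: (Hm _ le3); rewrite subnKC //.
  by rewrite /msg prednK.
have key : forall W0 : {set 'I_n}, W0 \subset Xs -> ~~ inconsistent_round A (GW W0) r.+1 ->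
   forall x, x \in Xs -> answer A (exec A (GW W0) r.+1 v) u x = Some (x \in W0).
  move=> W0 sW0 c x xX.
  case E: (answer A (exec A (GW W0) r.+1 v) u x) => [b|].
    rewrite (corr _ (GW_valid sW0) r.+1 v u x b) //.
    rewrite /two_hop GW_ux //.
    have -> : GW W0 r.+1 v u by rewrite GW_vy // eqxx /= hv.
    by rewrite !orbT andbT.
  move: c; rewrite /inconsistent_round; case/negP.
  by apply/existsP; exists v; apply/existsP; exists u; apply/existsP; exists x; rewrite E.
apply/setP => x.
case xX: (x \in Xs).
  have := key _ sW c1 _ xX; rewrite Es key // => -[].
  done.
move/subsetP: sW => sW; move/subsetP: sW' => sW'.
case E1: (x \in W); first by rewrite (sW _ E1) in xX.
case E2: (x \in W') => //; by rewrite (sW' _ E2) in xX.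
Qed.

End Constr.

Lemma exists_good (T : finType) (S : {set T}) R (p : 'I_R -> T -> bool) M :
  (forall r, #|[set x in S | p r x]| <= M) -> R * M < #|S| ->
  exists x, x \in S /\ forall r, ~~ p r x.
Proof.
move=> HM HR.
case: (pickP [pred x in S | [forall r, ~~ p r x]]) => [x /andP[xS /forallP H]|none].
  by exists x.
suff : #|S| <= R * M by rewrite leqNgt HR.
have -> : #|S| = \sum_(x in S) 1 by rewrite sum1_card.
apply: leq_trans (_ : \sum_(x in S) \sum_(r < R) (p r x : nat) <= _).
  apply: leq_sum => x xS.
  move: (none x); rewrite /= xS /= => /negbT; rewrite negb_forall => /existsP[r].
  rewrite negbK => prx.
  by rewrite (bigD1 r) //= prx.
rewrite exchange_big /=.
apply: leq_trans (_ : \sum_(r < R) M <= _); last by rewrite sum_nat_const card_ord.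
apply: leq_sum => r _.
apply: leq_trans (HM r).
rewrite -sum1_card (big_mkcond (fun x => x \in [set x in S | p r x])) /=.
rewrite [X in X <= _]big_mkcond /=; apply: leq_sum => x _.
by rewrite inE; case: (x \in S); case: (p r x).
Qed.

Definition code B (s : seq bool) : {ffun 'I_B -> option bool} :=
  [ffun t : 'I_B => nth None (map Some s) t].

Lemma card_code B : #|{ffun 'I_B -> option bool}| = 3 ^ B.
Proof. by rewrite card_ffun card_option card_bool card_ord. Qed.

Lemma nth_code (s : seq bool) t :
  nth None (map Some s) t = if t < size s then Some (nth false s t) else None.
Proof.
case: ltnP => Ht; first by rewrite (nth_map false).
by rewrite nth_default // size_map.
Qed.

Lemma code_inj B s s' : size s <= B -> size s' <= B -> code B s = code B s' -> s = s'.
Proof.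
move=> Hs Hs' Hc.
have E : forall t, t < B -> nth None (map Some s) t = nth None (map Some s') t.
  move=> t tB; move: (congr1 (fun f : {ffun 'I_B -> option bool} => f (Ordinal tB)) Hc).
  by rewrite !ffunE.
have Sz : size s = size s'.
  apply/eqP; rewrite eqn_leq; apply/andP; split; rewrite leqNgt; apply/negP => Hlt.
  - move: (E (size s') (leq_trans Hlt Hs)); rewrite !nth_code Hlt ltnn //.
  - move: (E (size s) (leq_trans Hlt Hs')); rewrite !nth_code Hlt ltnn //.
apply: (@eq_from_nth _ false) => // t Ht.
move: (E t (leq_trans Ht Hs)); rewrite !nth_code -Sz Ht.
by case.
Qed.

Lemma bad_bound n (u : 'I_n) h P (u0 : val u = 0) (h1 : 0 < h) (P0 : 0 < P)
  (A : dyn_alg n) B (mb : msg_bounded A B) (corr : correct_2hop A) r (v : 'I_n)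
  (hv : val v = h + r %/ P) :
  #|[set W in powerset (Xs n h) | ~~ inconsistent_round A (GW u h P W) r.+1]|
    <= 3 ^ (B * P).
Proof.
set D := [set W in _ | _].
pose f := fun W => [ffun t : 'I_P => code B (msg u h P A W v (r %/ P * P + t))].
rewrite -(@card_in_imset _ _ f D).
  apply: leq_trans; first exact: max_card.
  by rewrite card_ffun card_code card_ord -expnM.
move=> W W'; rewrite !inE => /andP[sW c1] /andP[sW' c2] Hf.
apply: (determine u0 h1 corr sW sW' hv c1 c2) => t Ht.
have tP : t < P by apply: leq_ltn_trans Ht (ltn_pmod r P0).
move: (congr1 (fun g : {ffun 'I_P -> {ffun 'I_B -> option bool}} => g (Ordinal tP)) Hf).
by rewrite /f !ffunE /=; apply: code_inj; apply: mb.
Qed.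

Definition Eset n (G : dyn_graph n) i :=
  [set p : 'I_n * 'I_n | (p.1 < p.2) && G i p.1 p.2].

Lemma total_changes_mono n (G : dyn_graph n) :
  (forall a b, G 0 a b = false) -> (forall k a b, G k a b -> G k.+1 a b) ->
  forall i, total_changes G i = #|Eset G i|.
Proof.
move=> G0 Gm; elim=> [|i IH].
  rewrite /total_changes big_geq //.
  by apply/esym/eq_card0 => p; rewrite !inE G0 andbF.
rewrite /total_changes big_nat_recr //= -/(total_changes G i) IH.
have sub : Eset G i \subset Eset G i.+1.
  by apply/subsetP => p; rewrite !inE => /andP[-> /Gm].
have -> : changes G i.+1 = #|Eset G i.+1 :\: Eset G i|.
  rewrite /changes; apply: eq_card => p; rewrite !inE /=.
  case: (p.1 < p.2); rewrite //=.
  case E1: (G i.+1 p.1 p.2); case E2: (G i p.1 p.2) => //=.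
  by rewrite (Gm _ _ _ E2) in E1.
rewrite cardsD (setIidPr sub) subnKC //.
exact: subset_leq_card.
Qed.

Lemma Eset_GW_card n (u : 'I_n) h P (u0 : val u = 0) (W : {set 'I_n}) i :
  #|Eset (GW u h P W) i| <= n.
Proof.
have inj : {in Eset (GW u h P W) i &, injective (fun p : 'I_n * 'I_n => p.2)}.
  have fst : forall p, p \in Eset (GW u h P W) i -> p.1 = u.
    move=> [a b]; rewrite inE /= /GW => /and3P[ab _ /orP[/andP[/eqP -> _]|/andP[/eqP E _]]] //.
    by move: ab; rewrite E u0.
  move=> [a b] [a' b'] H H' /= E.
  by rewrite -E; move: (fst _ H) (fst _ H') => /= -> ->.
rewrite -(card_in_imset inj).
apply: leq_trans; first exact: max_card.
by rewrite card_ord.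
Qed.

Lemma GW_mono n (u : 'I_n) h P (W : {set 'I_n}) k a b :
  GW u h P W k a b -> GW u h P W k.+1 a b.
Proof.
have am : forall b, adjU h P W k b -> adjU h P W k.+1 b.
  move=> c; rewrite /adjU => /orP[->//|/andP[-> hc]]; apply/orP; right.
  apply: leq_trans hc _; rewrite leq_add2l; apply: leq_div2r.
  by rewrite /=; case: k => //= k; apply: leqnSn.
rewrite /GW => /andP[_ /orP[/andP[-> /am ->]|/andP[-> /am ->]]] //.
by rewrite orbT.
Qed.

Lemma sq_le L : L * L <= 4 * 2 ^ L.
Proof.
elim: L => [//|L IH].
have H := ltn_expl L (isT : 1 < 2).
rewrite expnS; nia.
Qed.

Lemma exp3_le e : 3 ^ e <= 2 ^ (2 * e).
Proof.
elim: e => [//|e IH].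
rewrite mulnS expnS !expnS; nia.
Qed.

Lemma card_Xs n h : h <= n -> h.-1 <= #|Xs n h|.
Proof.
move=> hn.
have f_ok : forall j : 'I_h.-1, j.+1 < n.
  move=> j; have := ltn_ord j; lia.
pose f := fun j : 'I_h.-1 => Ordinal (f_ok j).
have finj : injective f by move=> a b [] E; apply: val_inj.
rewrite -[X in X <= _]card_ord -(card_imset _ finj).
apply: subset_leq_card; apply/subsetP => x /imsetP[j _ ->].
rewrite inE /=; have := ltn_ord j; lia.
Qed.

Theorem corollary6 :
  forall C : nat, exists K : nat, 0 < K /\ exists n0 : nat,
  forall n : nat, n0 <= n ->
  forall A : dyn_alg n,
    msg_bounded A (C * trunc_log 2 n) ->
    correct_2hop A ->
    ~ amortized_le A n (K * trunc_log 2 n).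
Proof.
move=> C; exists (64 * C.+1); split; first by [].
exists (2 ^ (64 * C.+1)) => n n0n A mb corr Ham.
have n64 : 64 <= n.
  apply: leq_trans n0n; rewrite (_ : 64 = 2 ^ 6) // leq_exp2l //; lia.
have n0 : 0 < n by lia.
set L := trunc_log 2 n.
have LL : 64 * C.+1 <= L := trunc_log_max (isT : 1 < 2) n0n.
have L2 : 2 ^ L <= n := trunc_logP (isT : 1 < 2) n0.
have Lt : n < 2 ^ L.+1 := trunc_log_ltn n (isT : 1 < 2).
have Lsq : L * L <= 4 * n by apply: leq_trans (sq_le L) _; rewrite leq_mul2l L2 orbT.
set K := 64 * C.+1.
have KL0 : 0 < K * L by rewrite muln_gt0; apply/andP; split; lia.
set q := (4 * n) %/ (K * L).
set P := q.+1.
have P0 : 0 < P by [].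
have Hq := divn_eq (4 * n) (K * L).
have Hr := ltn_pmod (4 * n) KL0.
have HY1 : 4 * n < K * L * P.
  rewrite /P mulnS; nia.
have HY2 : K * L * P <= 4 * n + K * L.
  rewrite /P mulnS; nia.
set h := n./2.
have h1 : 0 < h by rewrite /h; lia.
have hn : h <= n by rewrite /h; lia.
set k := n - h.
pose u : 'I_n := Ordinal n0.
have u0 : val u = 0 by [].
set R := k * P.
set B := C * L.
pose p := fun (r : 'I_R) (W : {set 'I_n}) => ~~ inconsistent_round A (GW u h P W) r.+1.
have [W [WS Hall]] : exists W, W \in powerset (Xs n h) /\ forall r, ~~ p r W.
  apply: (@exists_good _ _ R p (3 ^ (B * P))).
    move=> r.
    have rk : r %/ P < k by rewrite ltn_divLR // -/R.
    have vn : h + r %/ P < n by rewrite /k in rk; lia.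
    exact: (@bad_bound n u h P u0 h1 P0 A B mb corr r (Ordinal vn) erefl).
  rewrite card_powerset.
  apply: (@leq_trans (2 ^ (h.-1))); last by rewrite leq_exp2l // card_Xs.
  apply: (@leq_trans (2 ^ (2 * L + 4) * 2 ^ (2 * (B * P)))).
    apply: (@leq_ltn_trans (R * 2 ^ (2 * (B * P)))).
      by rewrite leq_mul2l exp3_le orbT.
    rewrite ltn_mul2r expn_gt0 /=.
    have kn : k < 2 ^ L.+1 by rewrite /k; lia.
    have Pn : P < 2 ^ L.+3.
      have : q <= 4 * n by apply: leq_div.
      rewrite !expnS in Lt *; rewrite /P; lia.
    have := ltn_mul kn Pn; rewrite -expnD.
    move=> H; apply: leq_trans H _; rewrite leq_exp2l //; lia.
  rewrite -expnD leq_exp2l //.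
  have e1 : K * (B * P) = C * (K * L * P) by rewrite /B; lia.
  have s1 : K * (B * P) <= C.+1 * (4 * n + 64 * (C * L)).
    rewrite e1; apply: leq_trans (leq_mul (leqnn C) HY2) _; rewrite /K; lia.
  have s3 : 16 * (B * P) <= n + 16 * (C * L).
    have : C.+1 * (64 * (B * P)) <= C.+1 * (4 * n + 64 * (C * L)).
      by apply: leq_trans s1; rewrite /K; lia.
    rewrite leq_pmul2l //; lia.
  have s4 : K * L <= 4 * n by apply: leq_trans Lsq; rewrite leq_mul2r LL orbT.
  rewrite /K in s4; rewrite /h; lia.
have sW : W \subset Xs n h by rewrite powersetE in WS.
have Hv := @GW_valid n u h P u0 h1 W sW.
move: (Ham _ Hv R).
have -> : inconsistent_count A (GW u h P W) R = R.
  rewrite /inconsistent_count (eq_big_nat _ _ (F2 := fun _ => 1)).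
    by rewrite sum_nat_const_nat subn1 muln1.
  move=> i /andP[i1 iR].
  have iR' : i.-1 < R by lia.
  move: (Hall (Ordinal iR')); rewrite /p /= negbK prednK //.
  by move=> ->.
rewrite (total_changes_mono (proj1 Hv) (@GW_mono n u h P W)).
move=> H1.
have H2 : K * L * R <= n * n.
  apply: leq_trans H1 _; rewrite leq_mul2l; apply/orP; right.
  exact: Eset_GW_card.
have H3 : (4 * n).+1 * k <= n * n.
  have e2 : K * L * P * k = K * L * R by rewrite /R; lia.
  apply: leq_trans H2; rewrite -e2 leq_mul2r HY1 orbT //.
have H4 : n <= 2 * k by rewrite /k /h; lia.
nia.
Qed.
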